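(* Let $a=(a_j)_{j\in\mathbb Z}\subset\mathbb R$ be such that $$\lim_{k\to\infty}\frac1k\sum_{j=0}^{k-1}a_j=\lim_{k\to\infty}\frac1k\sum_{j=-1}^{-k}a_j=\bar a.$$ For $n\in\mathbb N$ let $p^{(n)}=(p^{(n)}_j)_{j\in\mathbb Z}$ be the density of a probability distribution on $\mathbb Z$, with expectation denoted $\mathcal E_n$, such that (i) $j\mapsto p^{(n)}_j$ is increasing on $\mathbb Z^-$ and decreasing on $\mathbb Z_0^+$; (ii) for all $r\in\mathbb N$, $\mathcal E_n(1_{[-r,r]})=\sum_{j=-r}^rp^{(n)}_j\to0$ as $n\to\infty$. Then $$\lim_{n\to\infty}\mathcal E_n(a)=\lim_{n\to\infty}\sum_{j\in\mathbb Z}p^{(n)}_ja_j=\bar a.$$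
   Context: $\mathbb Z^-$ denotes the negative integers and $\mathbb Z_0^+$ the non-negative integers; monotonicity in (i) is in the weak sense. *)

(* Defs.v *)
From HB Require Import structures.
From mathcomp Require Import all_boot all_order all_algebra.
From mathcomp Require Import all_classical all_reals topology normedtype sequences.
Set Implicit Arguments. Unset Strict Implicit. Unset Printing Implicit Defensive.
Import Order.TTheory GRing.Theory Num.Theory.
Import numFieldNormedType.Exports.
Local Open Scope classical_set_scope.
Local Open Scope ring_scope.

Definition sum_Z_to (R : realType) (f : int -> R) (l : R) : Prop :=
  exists u v : R,
    [/\ (\sum_(0 <= j < N) f (j%:Z)) @[N --> \oo] --> u,
        (\sum_(1 <= j < N.+1) f (- (j%:Z))) @[N --> \oo] --> v
      & l = u + v].

Definition sym_sum (R : realType) (f : int -> R) (r : nat) : R :=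
  \sum_(0 <= i < (r.*2).+1) f (i%:Z - r%:Z).

(* Main.v *)
Require Import Defs.
From HB Require Import structures.
From mathcomp Require Import all_boot all_order all_algebra.
From mathcomp Require Import all_classical all_reals topology normedtype sequences.
From mathcomp Require Import lra ring zify.
Import Order.TTheory GRing.Theory Num.Theory.
Import numFieldNormedType.Exports.
Local Open Scope classical_set_scope.
Local Open Scope ring_scope.
Section S.
Variable R : realType.

Lemma abel (q c : nat -> R) N :
  \sum_(0 <= j < N) q j * (c j.+1 - c j) =
  \sum_(0 <= j < N) (q j - q j.+1) * c j.+1 + q N * c N - q 0%N * c 0%N.
Proof.
elim: N => [|N IH]; first by rewrite big_geq // big_geq // add0r subrr.
rewrite !big_nat_recr //= IH; ring.
Qed.

Lemma abel_bound (q c : nat -> R) K d N : 0 <= d ->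
  (forall j, 0 <= q j) -> (forall j, q j.+1 <= q j) ->
  (forall k, `|c k| <= K + d * k%:R) ->
  `|\sum_(0 <= j < N) q j * (c j.+1 - c j)| <=
     2 * K * q 0%N + d * \sum_(0 <= j < N) q j.
Proof.
move=> d0 q0 qd hc.
set c' := fun k : nat => K + d * k%:R.
have H' := abel q c' N.
have E : \sum_(0 <= j < N) q j * (c' j.+1 - c' j) = d * \sum_(0 <= j < N) q j.
  rewrite mulr_sumr; apply: eq_bigr => j _; rewrite /c' -natr1; ring.
rewrite E in H'.
rewrite abel.
have h1 : `|\sum_(0 <= j < N) (q j - q j.+1) * c j.+1| <=
          \sum_(0 <= j < N) (q j - q j.+1) * c' j.+1.
  apply: le_trans (ler_norm_sum _ _ _) _; apply: ler_sum => j _.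
  rewrite normrM ger0_norm ?subr_ge0 //; apply: ler_wpM2l; first by rewrite subr_ge0.
  exact: hc.
have h2 : `|q N * c N| <= q N * c' N.
  by rewrite normrM ger0_norm //; apply: ler_wpM2l.
have h3 : `|q 0%N * c 0%N| <= q 0%N * K.
  rewrite normrM ger0_norm //; apply: ler_wpM2l => //; have := hc 0%N; by rewrite mulr0 addr0.
have h3' : q 0%N * c' 0%N = q 0%N * K by rewrite /c' mulr0 addr0.
apply: le_trans (ler_normB _ _) _.
apply: le_trans (lerD (ler_normD _ _) (lexx _)) _.
rewrite h3' in H'.
rewrite H'; apply: le_trans (lerD (lerD h1 h2) h3) _.
rewrite le_eqVlt; apply/orP; left; apply/eqP; ring.
Qed.
Lemma cbound (b : nat -> R) abar
  (hb : (k%:R^-1 * \sum_(0 <= j < k) b j) @[k --> \oo] --> abar) d : 0 < d ->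
  exists K, forall k, `|\sum_(0 <= j < k) (b j - abar)| <= K + d * k%:R.
Proof.
move=> d0; move/cvgrPdist_le: hb => /(_ d d0) [r _ Hr].
set c := fun k => \sum_(0 <= j < k) (b j - abar).
have [K [K0 HK]] : exists K, 0 <= K /\ forall k, (k < r.+1)%N -> `|c k| <= K.
  elim: r.+1 => [|m [K [K0 HK]]]; first by exists 0; split => // k; rewrite ltn0.
  exists (K + `|c m|); split; first by rewrite addr_ge0.
  move=> k; rewrite ltnS leq_eqVlt => /orP [/eqP -> | km].
    by rewrite lerDr.
  by apply: le_trans (HK _ km) _; rewrite lerDl.
exists K => k; rewrite -/(c k).
have [kr | rk] := ltnP k r.+1.
  by apply: le_trans (HK _ kr) _; rewrite lerDl mulr_ge0 // ltW.
have k0 : k%:R != 0 :> R by rewrite pnatr_eq0 -lt0n (leq_trans _ rk).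
have E : c k = - k%:R * (abar - k%:R^-1 * \sum_(0 <= j < k) b j).
  by rewrite /c sumrB sumr_const_nat subn0 -mulr_natl; field.
have := Hr k (ltnW rk); rewrite /= => H.
rewrite E normrM normrN normr_nat (mulrC d).
apply: le_trans (ler_wpM2l _ H) _ => //; rewrite lerDr //.
Qed.

Lemma sum_shift (f : nat -> R) N0 L :
  \sum_(0 <= j < N0 + L) f j = \sum_(0 <= j < N0) f j + \sum_(0 <= j < L) f (N0 + j)%N.
Proof.
elim: L => [|L IH]; first by rewrite addn0 [X in _ + X]big_geq // addr0.
by rewrite addnS !big_nat_recr //= ?leq_addr // IH addrA.
Qed.

Section Side.
Variables (b q : nat -> R) (abar u : R).
Hypothesis hb : (k%:R^-1 * \sum_(0 <= j < k) b j) @[k --> \oo] --> abar.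
Hypothesis q0 : forall j, 0 <= q j.
Hypothesis qd : forall j, q j.+1 <= q j.
Hypothesis hs : (\sum_(0 <= j < N) q j) @[N --> \oo] --> u.

Lemma qmono j k : (j <= k)%N -> q k <= q j.
Proof.
elim: k => [|k IH]; first by rewrite leqn0 => /eqP ->.
rewrite leq_eqVlt => /orP [/eqP -> //| ]; rewrite ltnS => /IH; exact: le_trans (qd k).
Qed.

Lemma sle N : \sum_(0 <= j < N) q j <= u.
Proof.
have := @nondecreasing_cvgn_le R (fun N => \sum_(0 <= j < N) q j) _ _ N.
rewrite (cvg_lim _ hs) //; apply => //.
by apply: nondecreasing_series => n _ _.
Qed.

Lemma u_ge0 : 0 <= u.
Proof. by apply: le_trans (sle 0); rewrite big_geq. Qed.

Lemma Nq N : N%:R * q N <= u.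
Proof.
apply: le_trans (sle N).
have -> : N%:R * q N = \sum_(0 <= j < N) q N by rewrite sumr_const_nat subn0 mulr_natl.
apply: ler_sum_nat => j /andP [_ jN].
exact/qmono/ltnW.
Qed.

Definition cc k := \sum_(0 <= j < k) (b j - abar).

Lemma ccS k : b k - abar = cc k.+1 - cc k.
Proof. by rewrite /cc big_nat_recr //= addrC addrK. Qed.

Lemma side_cvg : cvgn (fun N => \sum_(0 <= j < N) q j * (b j - abar)).
Proof.
apply: cauchy_cvg; apply: cauchy_exP => e e0.
have u0 := u_ge0.
set d := e / (4 * (u + 1)).
have d0 : 0 < d by rewrite /d divr_gt0 // mulr_gt0 // ltr_wpDl.
have du : d * u < e / 4.
  rewrite /d mulrAC ltr_pdivrMr ?mulr_gt0 ?ltr_wpDl //.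
  have -> : e / 4 * (4 * (u + 1)) = e * u + e by field.
  by rewrite ltrDl.
have [K HK] := @cbound b abar hb d d0.
have K0 : 0 <= K by have := HK 0%N; rewrite mulr0 addr0; apply: le_trans.
have qcvg : q N @[N --> \oo] --> 0.
  by apply: cvg_series_cvg_0; apply/cvg_ex; exists u.
set e' := e / (8 * (K + 1)).
have e'0 : 0 < e' by rewrite /e' divr_gt0 // mulr_gt0 // ltr_wpDl.
move/cvgrPdist_lt: qcvg => /(_ e' e'0) [N0 _ HN0].
have qN0 : q N0 < e' by have := HN0 N0 (leqnn _); rewrite /= sub0r normrN ger0_norm.
have KqN0 : 2 * K * q N0 <= e / 4.
  have K1 : 0 < K + 1 by rewrite ltr_wpDl.
  have h : (K + 1) * q N0 <= (K + 1) * e' by apply: ler_wpM2l; [exact: ltW | exact: ltW].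
  have E8 : (K + 1) * e' = e / 8.
    rewrite /e'; field; by rewrite lt0r_neq0.
  rewrite E8 in h.
  have := q0 N0; move: h; set x := q N0 => h hx.
  have -> : 2 * K * x = 2 * ((K + 1) * x) - 2 * x by ring.
  lra.
exists (\sum_(0 <= j < N0) q j * (b j - abar)).
exists N0 => // N /= hN; rewrite -(subnKC hN) sum_shift.
set L := (N - N0)%N; rewrite -ball_normE /=.
rewrite opprD addrA subrr sub0r normrN.
have hab := @abel_bound (fun j => q (N0 + j)%N) (fun k => cc (N0 + k)%N) (K + d * N0%:R) d L (ltW d0).
have -> : \sum_(0 <= j < L) q (N0 + j)%N * (b (N0 + j)%N - abar) =
          \sum_(0 <= j < L) q (N0 + j)%N * (cc (N0 + j.+1)%N - cc (N0 + j)%N).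
  by apply: eq_bigr => j _; rewrite ccS addnS.
apply: le_lt_trans (hab _ _ _) _.
- by move=> j; exact: q0.
- by move=> j; rewrite addnS; exact: qd.
- move=> k; apply: le_trans (HK _) _; rewrite natrD; lra.
rewrite addn0.
have tail : \sum_(0 <= j < L) q (N0 + j)%N <= u.
  apply: le_trans (sle (N0 + L)); rewrite sum_shift lerDr.
  by apply: sumr_ge0 => j _.
have h1 : d * \sum_(0 <= j < L) q (N0 + j)%N <= d * u by apply: ler_wpM2l => //; exact: ltW.
have h2 : d * (N0%:R * q N0) <= d * u by apply: ler_wpM2l; [exact: ltW | exact: Nq].
have -> : 2 * (K + d * N0%:R) * q N0 = 2 * K * q N0 + 2 * (d * (N0%:R * q N0)) by ring.
lra.
Qed.

End Side.

Lemma side_all (b : nat -> R) (abar : R)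
  (hb : (k%:R^-1 * \sum_(0 <= j < k) b j) @[k --> \oo] --> abar) (d : R) : 0 < d ->
  exists K : R, 0 <= K /\ forall (q : nat -> R) (u : R), (forall j, 0 <= q j) -> (forall j, q j.+1 <= q j) ->
    (\sum_(0 <= j < N) q j) @[N --> \oo] --> u ->
    exists T : R, (\sum_(0 <= j < N) q j * b j) @[N --> \oo] --> T /\
              `|T - abar * u| <= 2 * K * q 0%N + d * u.
Proof.
move=> d0; have [K HK] := @cbound b abar hb d d0.
exists K; split; first by have := HK 0%N; rewrite mulr0 addr0; apply: le_trans.
move=> q u q0 qd hs.
have hD := @side_cvg b q abar u hb q0 qd hs.
set D := fun N => \sum_(0 <= j < N) q j * (b j - abar).
set TD := lim (D N @[N --> \oo]).
exists (TD + abar * u); split.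
  have -> : (fun N => \sum_(0 <= j < N) q j * b j) = (fun N => D N + abar * \sum_(0 <= j < N) q j).
    apply: boolp.funext => N; rewrite /D mulr_sumr -big_split /=.
    by apply: eq_bigr => j _; ring.
  apply: cvgD; first exact: hD.
  exact: cvgMr.
rewrite addrK.
have Hf : (2 * K * q 0%N + d * \sum_(0 <= j < N) q j - `|D N|) @[N --> \oo] -->
          (2 * K * q 0%N + d * u - `|TD|).
  apply: cvgB; first (apply: cvgD; [exact: cvg_cst | exact: cvgMr]).
  exact: cvg_norm.
have := cvgr_to_ge Hf; move=> /(_ _ 0); rewrite subr_ge0; apply => //.
exists 0%N => // N _ /=; rewrite subr_ge0.
rewrite /D.
have -> : \sum_(0 <= j < N) q j * (b j - abar) =
          \sum_(0 <= j < N) q j * (cc b abar j.+1 - cc b abar j).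
  by apply: eq_bigr => j _; rewrite ccS.
apply: abel_bound => //; exact: ltW.
Qed.
End S.

Lemma negshift (R : realType) (f : nat -> R) k :
  \sum_(1 <= j < k.+1) f j = \sum_(0 <= j < k) f j.+1.
Proof. by rewrite big_add1. Qed.

Theorem lemmaA5 (R : realType) (a : int -> R) (abar : R) (p : nat -> int -> R)
  (ha_pos : (k%:R^-1 * \sum_(0 <= j < k) a (j%:Z)) @[k --> \oo] --> abar)
  (ha_neg : (k%:R^-1 * \sum_(1 <= j < k.+1) a (- (j%:Z))) @[k --> \oo] --> abar)
  (hp_nonneg : forall n j, 0 <= p n j)
  (hp_prob : forall n, sum_Z_to (p n) 1)
  (hp_inc : forall n (i j : int), i <= j -> j < 0 -> p n i <= p n j)
  (hp_dec : forall n (i j : int), 0 <= i -> i <= j -> p n j <= p n i)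
  (hp_loc : forall r : nat, (sym_sum (p n) r) @[n --> \oo] --> 0) :
  exists E : nat -> R,
    (forall n, sum_Z_to (fun j => p n j * a j) (E n)) /\ E n @[n --> \oo] --> abar.
Proof.
set bp := fun j : nat => a j%:Z.
set bm := fun j : nat => a (- (j.+1)%:Z).
set qp := fun n (j : nat) => p n j%:Z.
set qm := fun n (j : nat) => p n (- (j.+1)%:Z).
have hbp : (k%:R^-1 * \sum_(0 <= j < k) bp j) @[k --> \oo] --> abar by exact: ha_pos.
have hbm : (k%:R^-1 * \sum_(0 <= j < k) bm j) @[k --> \oo] --> abar.
  have E : (fun k => k%:R^-1 * \sum_(0 <= j < k) bm j) =
           (fun k => k%:R^-1 * \sum_(1 <= j < k.+1) a (- (j%:Z))).
    by apply: boolp.funext => k; rewrite negshift.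
  by rewrite E.
have qp0 n j : 0 <= qp n j by exact: hp_nonneg.
have qm0 n j : 0 <= qm n j by exact: hp_nonneg.
have qpd n j : qp n j.+1 <= qp n j by apply: hp_dec; lia.
have qmd n j : qm n j.+1 <= qm n j by apply: hp_inc; lia.
have hprob n : exists u v : R,
    [/\ (\sum_(0 <= j < N) qp n j) @[N --> \oo] --> u,
        (\sum_(0 <= j < N) qm n j) @[N --> \oo] --> v & 1 = u + v].
  have [u [v [hu hv huv]]] := hp_prob n.
  exists u, v; split => //.
  have E : (fun N => \sum_(0 <= j < N) qm n j) =
           (fun N => \sum_(1 <= j < N.+1) p n (- (j%:Z))).
    by apply: boolp.funext => N; rewrite negshift.
  by rewrite E.
set Pp := fun n N => \sum_(0 <= j < N) qp n j * bp j.
set Pm := fun n N => \sum_(0 <= j < N) qm n j * bm j.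
exists (fun n => lim (Pp n N @[N --> \oo]) + lim (Pm n N @[N --> \oo])).
have [K1p [_ HK1p]] := @side_all R bp abar hbp 1 ltr01.
have [K1m [_ HK1m]] := @side_all R bm abar hbm 1 ltr01.
split.
  move=> n; have [u [v [hu hv _]]] := hprob n.
  have [Tp [hTp _]] := HK1p (qp n) u (qp0 n) (qpd n) hu.
  have [Tm [hTm _]] := HK1m (qm n) v (qm0 n) (qmd n) hv.
  exists (lim (Pp n N @[N --> \oo])), (lim (Pm n N @[N --> \oo])); split => //.
    by rewrite (cvg_lim _ hTp).
  have E : (fun N => \sum_(1 <= j < N.+1) p n (- (j%:Z)) * a (- (j%:Z))) = Pm n.
    by apply: boolp.funext => N; rewrite negshift.
  by rewrite E (cvg_lim _ hTm).
apply/cvgrPdist_le => eps eps0.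
have d0 : 0 < eps / 2 by rewrite divr_gt0.
have [Kp [Kp0 HKp]] := @side_all R bp abar hbp _ d0.
have [Km [Km0 HKm]] := @side_all R bm abar hbm _ d0.
set e' := eps / (4 * (Kp + Km + 1)).
have e'0 : 0 < e' by rewrite divr_gt0 // mulr_gt0 // ltr_wpDl // addr_ge0.
move/cvgrPdist_le: (hp_loc 1%N) => /(_ e' e'0) [N0 _ HN0].
exists N0 => // n /= hn.
have := HN0 n hn; rewrite /= sub0r normrN => hS.
have hS' : qp n 0%N + qm n 0%N <= e'.
  apply: le_trans (le_trans (ler_norm _) hS).
  rewrite /sym_sum /= !big_nat_recr //= big_geq // add0r.
  have e1 : p n (0%:Z - 1%:Z) = qm n 0%N by [].
  have e2 : p n (1%:Z - 1%:Z) = qp n 0%N by [].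
  rewrite e1 e2; have := hp_nonneg n (2%:Z - 1%:Z); lra.
have [u [v [hu hv huv]]] := hprob n.
have [Tp [hTp bTp]] := HKp (qp n) u (qp0 n) (qpd n) hu.
have [Tm [hTm bTm]] := HKm (qm n) v (qm0 n) (qmd n) hv.
rewrite (cvg_lim _ hTp) // (cvg_lim _ hTm) //.
set x := qp n 0%N in hS' bTp; set y := qm n 0%N in hS' bTm.
have x0 : 0 <= x by exact: qp0.
have y0 : 0 <= y by exact: qm0.
set M := Kp + Km + 1.
have hM : 0 < M by rewrite /M ltr_wpDl // addr_ge0.
have h1 : Kp * x <= M * x by apply: ler_wpM2r => //; rewrite /M; lra.
have h2 : Km * y <= M * y by apply: ler_wpM2r => //; rewrite /M; lra.
have h3 : M * (x + y) <= M * e' by apply: ler_wpM2l => //; exact: ltW.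
have h4 : M * e' = eps / 4 by rewrite /e' -/M; field; rewrite lt0r_neq0.
have h5 : `|abar - (Tp + Tm)| <= `|Tp - abar * u| + `|Tm - abar * v|.
  have -> : abar - (Tp + Tm) = - ((Tp - abar * u) + (Tm - abar * v)).
    have {1}-> : abar = abar * (u + v) by rewrite -huv mulr1.
    ring.
  by rewrite normrN; apply: ler_normD.
have h6 : eps / 2 * u + eps / 2 * v = eps / 2 by rewrite -mulrDr -huv mulr1.
rewrite -mulrA in bTp; rewrite -mulrA in bTm.
rewrite mulrDr h4 in h3.
lra.
Qed.
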